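(* Let $R$ be a finite local Frobenius ring, not a field and of odd characteristic, with a fixed primitive additive character $\psi$. Let $\tau$ be a non-primitive multiplicative character and $\chi$ a non-primitive multiplicative character of $R$. Then $$\sum_{a\in R^\times}\chi(a)\,|K_\tau(a)|^2=\begin{cases}|R^\times|\,|R| & \text{if }\chi=\mathbb{1}\text{ or }\chi=\sigma,\\ 0&\text{otherwise.}\end{cases}$$
   Context: All rings are finite and commutative with identity; $R^\times$ is the unit group; $M$ is the maximal ideal. An additive character $(R,+)\to\mathbb{C}^*$ is primitive if the only ideal on which it is identically $1$ is $(0)$; $R$ is Frobenius if such a character exists. A multiplicative character is a homomorphism $R^\times\to\mathbb{C}^*$; $\mathbb{1}$ is the trivial one; its conductor is $R$ if it is trivial, and otherwise the largest ideal $I\subseteq M$ such that it is identically $1$ on $1+I$; it is primitive if its conductor is $(0)$. $K_\tau(a)=\sum_{u\in R^\times}\tau(u)\psi(u+au^{-1})$. Odd characteristic means $R/M$ has odd characteristic; the quadratic character $\sigma$ sends $u\in R^\times$ to the quadratic character of its residue class in $R/M$. *)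

(* Defs.v *)
From HB Require Import structures.
From mathcomp Require Import all_boot all_order all_algebra all_fingroup all_field.
Set Implicit Arguments. Unset Strict Implicit. Unset Printing Implicit Defensive.
Import GRing.Theory Num.Theory.
Local Open Scope ring_scope.

Section Defs.
Variable R : finComUnitRingType.

Definition is_ideal (I : {set R}) : Prop :=
  0 \in I /\ (forall x y, x \in I -> y \in I -> x + y \in I) /\
  (forall r x, x \in I -> r * x \in I).

Definition is_maximal_ideal (M : {set R}) : Prop :=
  is_ideal M /\ M != [set: R] /\
  (forall J : {set R}, is_ideal J -> M \subset J -> J = M \/ J = [set: R]).

Definition is_unique_maximal_ideal (M : {set R}) : Prop :=
  is_maximal_ideal M /\ forall J, is_maximal_ideal J -> J = M.

Definition odd_residue_char (M : {set R}) : Prop :=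
  exists p : nat, [/\ prime p, odd p & (p%:R : R) \in M].

Definition is_field_ring : Prop := forall x : R, x != 0 -> x \is a GRing.unit.

Definition additive_char (psi : R -> algC) : Prop :=
  (forall x, psi x != 0) /\ forall x y, psi (x + y) = psi x * psi y.

Definition primitive_additive_char (psi : R -> algC) : Prop :=
  additive_char psi /\
  forall I : {set R}, is_ideal I -> (forall x, x \in I -> psi x = 1) -> I = [set 0].

Definition mult_char (chi : {unit R} -> algC) : Prop :=
  (forall u, chi u != 0) /\ forall u v, chi (u * v)%g = chi u * chi v.

Definition trivial_char (chi : {unit R} -> algC) : Prop := forall u, chi u = 1.

Definition trivial_on_1plus (chi : {unit R} -> algC) (I : {set R}) : Prop :=
  forall u : {unit R}, FinRing.uval u - 1 \in I -> chi u = 1.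

(* conductor is (0): chi nontrivial and the largest ideal I <= M with chi = 1
   on 1 + I is (0), i.e. every such ideal is (0) *)
Definition primitive_mult_char (M : {set R}) (chi : {unit R} -> algC) : Prop :=
  ~ trivial_char chi /\
  forall I : {set R}, is_ideal I -> I \subset M -> trivial_on_1plus chi I ->
    I = [set 0].

Definition quad_char (M : {set R}) (u : {unit R}) : algC :=
  if [exists v : R, FinRing.uval u - v ^+ 2 \in M] then 1 else -1.

Definition kloosterman (psi : R -> algC) (tau : {unit R} -> algC) (a : R) : algC :=
  \sum_(u : {unit R}) tau u * psi (FinRing.uval u + a * (FinRing.uval u)^-1).

End Defs.

(* Main.v *)
Require Import Defs.
From HB Require Import structures.
From mathcomp Require Import all_boot all_order all_algebra all_fingroup all_field.
From Stdlib Require Import Classical.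
From mathcomp Require Import zify ring.
Import GRing.Theory Num.Theory.
Local Open Scope ring_scope.
Set Implicit Arguments. Unset Strict Implicit. Unset Printing Implicit Defensive.

Section Ring.
Variable R : finComUnitRingType.

Lemma ext_max n (J : {set R}) : (#|~: J| <= n)%N -> is_ideal J -> J != setT ->
  exists J', is_maximal_ideal J' /\ J \subset J'.
Proof.
elim: n J => [|n IH] J hc hJ hT.
  move: hc; rewrite leqn0 cards_eq0 => /eqP h0.
  by move: hT; rewrite -[J]setCK h0 setC0 eqxx.
case: (classic (forall J2 : {set R}, is_ideal J2 -> J \subset J2 -> J2 = J \/ J2 = setT)) => hmax.
  by exists J; split => //; split.
have [J2 [hJ2 [hs [hne hnT]]]] : exists J2 : {set R}, is_ideal J2 /\ J \subset J2 /\ J2 <> J /\ J2 <> setT.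
  apply: NNPP => hn; apply: hmax => J2 h1 h2.
  case: (classic (J2 = J)) => [->|h3]; first by left.
  case: (classic (J2 = setT)) => [->|h4]; first by right.
  by exfalso; apply: hn; exists J2.
have hp : J \proper J2 by rewrite properEneq hs andbT; apply/eqP => e; apply: hne.
have := proper_card hp.
have c1 := cardsC J; have c2 := cardsC J2.
move=> hlt.
have [J' [h1 h2]] : exists J', is_maximal_ideal J' /\ J2 \subset J'.
  apply: IH hJ2 (introN eqP hnT); move: hc; rewrite -ltnS; lia.
by exists J'; split => //; apply: subset_trans h2.
Qed.
End Ring.

Lemma root_norm (z : algC) n : (0 < n)%N -> z ^+ n = 1 -> z * z^* = 1.
Proof.
move=> hn hz; rewrite -normCK.
have : `|z| ^+ n == 1 by rewrite -normrX hz normr1.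
by rewrite pexpr_eq1 // => /eqP ->; rewrite expr1n.
Qed.

Lemma add_order (T : finZmodType) (x : T) : exists2 k, (0 < k)%N & x *+ k = 0.
Proof.
pose f (i : 'I_(#|T|.+1)) := x *+ i.
have : ~ injective f.
  by move=> hi; have := leq_card f hi; rewrite card_ord ltnn.
move=> hni; apply: NNPP => hn; apply: hni => i j hij.
apply: val_inj => /=; apply/eqP; apply: NNPP => hne.
wlog hlt : i j hij hne / (i < j)%N.
  move=> W; case: (ltngtP i j) => h.
  - exact: (W i j).
  - by apply: (W j i) => //; rewrite eq_sym.
  - by apply: hne; rewrite h.
apply: hn; exists (j - i)%N; first by rewrite subn_gt0.
move: hij; rewrite /f -(subnKC (ltnW hlt)) mulrnDr -{1}[x *+ i]addr0 => /addrI.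
by move=> h; rewrite addKn h.
Qed.
Section Main.
Variables (R : finComUnitRingType) (M : {set R}).
Hypothesis hM : is_unique_maximal_ideal M.
Hypothesis hnf : ~ is_field_ring R.
Hypothesis hodd : odd_residue_char M.

Lemma M0 : 0 \in M. Proof. by case: hM => [[[[]]]]. Qed.
Lemma MD x y : x \in M -> y \in M -> x + y \in M.
Proof. by case: hM => [[[_ []]]] => h _ _ _; apply: h. Qed.
Lemma MMl r x : x \in M -> r * x \in M.
Proof. by case: hM => [[[_ [_ h]]]] _ _; apply: h. Qed.
Lemma MMr x r : x \in M -> x * r \in M.
Proof. by rewrite mulrC; apply: MMl. Qed.
Lemma MN x : x \in M -> - x \in M.
Proof. by move=> h; rewrite -mulN1r; apply: MMl. Qed.
Lemma MB x y : x \in M -> y \in M -> x - y \in M.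
Proof. by move=> hx hy; apply: MD => //; apply: MN. Qed.
Lemma MNE x : (- x \in M) = (x \in M).
Proof. by apply/idP/idP => /MN //; rewrite opprK. Qed.

Lemma unitNM x : x \is a GRing.unit -> x \notin M.
Proof.
move=> hu; apply/negP => hx; case: hM => [[_ [hT _]] _]; move/negP: hT; apply.
apply/eqP/setP => y; rewrite inE.
have -> : y = (y * x^-1) * x by rewrite -mulrA mulVr ?mulr1.
by apply: MMl.
Qed.

Lemma nunitM x : x \isn't a GRing.unit -> x \in M.
Proof.
move=> hx.
pose J0 := [set y | [exists r, y == r * x]].
have hJ0 : is_ideal J0.
  split; first by rewrite inE; apply/existsP; exists 0; rewrite mul0r.
  split.
    move=> a b; rewrite !inE => /existsP [r1 /eqP ->] /existsP [r2 /eqP ->].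
    by apply/existsP; exists (r1 + r2); rewrite mulrDl.
  move=> r a; rewrite !inE => /existsP [r1 /eqP ->].
  by apply/existsP; exists (r * r1); rewrite mulrA.
have hT : J0 != setT.
  apply/negP => /eqP hJ; have : (1 : R) \in J0 by rewrite hJ inE.
  rewrite inE => /existsP [r /eqP h1]; move/negP: hx; apply.
  by apply/unitrP; exists r; split; rewrite // mulrC.
have [J' [hJ' hs]] := ext_max (leqnn _) hJ0 hT.
case: hM => _ huniq; rewrite -(huniq _ hJ').
apply: (subsetP hs); rewrite inE; apply/existsP; exists 1; by rewrite mul1r.
Qed.

Lemma MnU x : (x \in M) = (x \isn't a GRing.unit).
Proof.
apply/idP/idP; last by apply: nunitM.
by move=> hx; apply/negP => hu; move: (unitNM hu); rewrite hx.
Qed.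

Lemma M1 : (1 : R) \notin M. Proof. by rewrite MnU unitr1. Qed.

Lemma unit2 : (2 : R) \is a GRing.unit.
Proof.
case: hodd => p [pp op hp]; rewrite -[_ \is a _]negbK -MnU; apply/negP => h2.
move/negP: M1; apply.
have -> : (1 : R) = (p.+1./2)%:R * 2 - p%:R.
  rewrite -natrM.
  have -> : (p.+1./2 * 2 = p + 1)%N.
    have := odd_double_half p.+1; rewrite /= op /= add0n muln2 => ->; lia.
  by rewrite natrD addrAC subrr add0r.
by apply: MB => //; apply: MMl.
Qed.

Definition principal (x : R) := [set y | [exists r, y == r * x]].
Lemma principal_ideal x : is_ideal (principal x).
Proof.
split; first by rewrite inE; apply/existsP; exists 0; rewrite mul0r.
split.
  move=> a b; rewrite !inE => /existsP [r1 /eqP ->] /existsP [r2 /eqP ->].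
  by apply/existsP; exists (r1 + r2); rewrite mulrDl.
move=> r a; rewrite !inE => /existsP [r1 /eqP ->].
by apply/existsP; exists (r * r1); rewrite mulrA.
Qed.
Lemma principalP x y : reflect (exists r, y = r * x) (y \in principal x).
Proof.
rewrite inE; apply: (iffP existsP) => [[r /eqP ->]|[r ->]]; by exists r.
Qed.

Definition soc := [set s : R | [forall m, (m \in M) ==> (s * m == 0)]].
Lemma socP s : s \in soc -> forall m, m \in M -> s * m = 0.
Proof. by rewrite inE => /forallP h m hm; apply/eqP; move: (h m); rewrite hm. Qed.
Lemma socI s : (forall m, m \in M -> s * m = 0) -> s \in soc.
Proof. by move=> h; rewrite inE; apply/forallP => m; apply/implyP => hm; rewrite h. Qed.
Lemma soc_ideal : is_ideal soc.
Proof.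
split; first by apply: socI => m _; rewrite mul0r.
split.
  by move=> a b ha hb; apply: socI => m hm; rewrite mulrDl (socP ha) ?(socP hb) ?addr0.
by move=> r a ha; apply: socI => m hm; rewrite -mulrA (socP ha) ?mulr0.
Qed.

Lemma exM : exists m, m \in M /\ m != 0.
Proof.
apply: NNPP => hn; apply: hnf => x hx; rewrite -[_ \is a _]negbK -MnU.
by apply/negP => hxM; apply: hn; exists x.
Qed.

Lemma socM s : s \in soc -> s \in M.
Proof.
move=> hs; rewrite MnU; apply/negP => hu.
have [m [hm hm0]] := exM; move/eqP: hm0; apply.
by rewrite -[m]mul1r -(mulVr hu) -mulrA (socP hs hm) mulr0.
Qed.

Lemma soc_sq s t : s \in soc -> t \in soc -> s * t = 0.
Proof. by move=> hs ht; apply: (socP hs); apply: socM. Qed.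

Lemma unit1M m : m \in M -> (1 + m) \is a GRing.unit.
Proof.
move=> hm; rewrite -[_ \is a _]negbK -MnU; apply/negP => h.
by move/negP: M1; apply; rewrite -(addrK m 1); apply: MB.
Qed.

Lemma unitDM u m : u \is a GRing.unit -> m \in M -> (u + m) \is a GRing.unit.
Proof.
move=> hu hm; rewrite -[_ \is a _]negbK -MnU; apply/negP => h.
by move: (unitNM hu); rewrite -(addrK m u) (MB h hm).
Qed.

Lemma to_soc_ind n x : (#|principal x| <= n)%N -> x != 0 ->
  exists r, r * x != 0 /\ r * x \in soc.
Proof.
elim: n x => [|n IH] x hc hx.
  by move: hc; rewrite leqn0 cards_eq0 => /eqP h; move: (principal_ideal x) => [];
     rewrite h inE.
case: (boolP (x \in soc)) => hs; first by exists 1; rewrite mul1r.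
have [m [hm hxm]] : exists m, m \in M /\ x * m != 0.
  apply: NNPP => hn; move/negP: hs; apply; apply: socI => m hm.
  by apply/eqP; apply: NNPP => h; apply: hn; exists m; split => //; apply/negP.
have hsub : principal (m * x) \proper principal x.
  rewrite properE; apply/andP; split.
    by apply/subsetP => y /principalP [r ->]; apply/principalP; exists (r * m); rewrite mulrA.
  apply/subsetPn; exists x; first by apply/principalP; exists 1; rewrite mul1r.
  apply/negP => /principalP [r hr].
  have : (1 - r * m) * x = 0 by rewrite mulrBl mul1r -mulrA -hr subrr.
  have hu : (1 - r * m) \is a GRing.unit by apply: unit1M; apply: MN; apply: MMl.
  by move/(congr1 (fun z => (1 - r * m)^-1 * z)); rewrite mulrA mulVr // mul1r mulr0 => /eqP; rewrite (negbTE hx).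
have hc2 : (#|principal (m * x)%R| <= n)%N.
  by have := proper_card hsub; move: hc; rewrite -ltnS; lia.
have hmx : m * x != 0 by rewrite mulrC.
have [r [h1 h2]] := IH (m * x) hc2 hmx.
by exists (r * m); rewrite -mulrA.
Qed.

Lemma to_soc x : x != 0 -> exists r, r * x != 0 /\ r * x \in soc.
Proof. by apply: to_soc_ind (leqnn _). Qed.

Variable psi : R -> algC.
Hypothesis hpsi : primitive_additive_char psi.

Lemma psi_nontriv x : x != 0 -> exists r, psi (r * x) != 1.
Proof.
move=> hx; apply: NNPP => hn.
case: hpsi => _ hp.
have := hp _ (principal_ideal x).
have h : (forall y, y \in principal x -> psi y = 1).
  move=> y /principalP [r ->]; apply: NNPP => h; apply: hn; exists r; exact/eqP.
move=> /(_ h) hP; move/eqP: hx; apply.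
have : x \in principal x by apply/principalP; exists 1; rewrite mul1r.
by rewrite hP inE => /eqP.
Qed.


Lemma psi0 : psi 0 = 1.
Proof.
case: hpsi => [[hnz hD] _]; have := hD 0 0; rewrite addr0 => h.
by apply: (mulfI (hnz 0)); rewrite -h mulr1.
Qed.
Lemma psiD x y : psi (x + y) = psi x * psi y.
Proof. by case: hpsi => [[_ hD] _]; apply: hD. Qed.
Lemma psi_nz x : psi x != 0.
Proof. by case: hpsi => [[hnz _] _]. Qed.
Lemma psiN x : psi x * psi (- x) = 1.
Proof. by rewrite -psiD subrr psi0. Qed.
Lemma psiMn x k : psi (x *+ k) = psi x ^+ k.
Proof. by elim: k => [|k IH]; rewrite ?psi0 // mulrS psiD IH exprS. Qed.
Lemma psi_norm x : psi x * (psi x)^* = 1.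
Proof.
have [k hk hx] := add_order x; apply: (root_norm hk).
by rewrite -psiMn hx psi0.
Qed.
Lemma psi_conj x : (psi x)^* = psi (- x).
Proof.
by apply: (mulfI (psi_nz x)); rewrite psi_norm psiN.
Qed.
Lemma psiB x y : psi x * (psi y)^* = psi (x - y).
Proof. by rewrite psi_conj psiD. Qed.

Lemma mc1 (ch : {unit R} -> algC) : mult_char ch -> ch 1%g = 1.
Proof.
case=> hnz hM'; have := hM' 1%g 1%g; rewrite mulg1 => h.
by apply: (mulfI (hnz 1%g)); rewrite -h mulr1.
Qed.
Lemma mcM (ch : {unit R} -> algC) : mult_char ch -> forall u v, ch (u * v)%g = ch u * ch v.
Proof. by case. Qed.
Lemma mc_nz (ch : {unit R} -> algC) : mult_char ch -> forall u, ch u != 0.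
Proof. by case. Qed.
Lemma mcX (ch : {unit R} -> algC) : mult_char ch -> forall u k, ch (u ^+ k)%g = ch u ^+ k.
Proof.
move=> hc u; elim=> [|k IH]; first by rewrite expg0 (mc1 hc).
by rewrite expgS (mcM hc) IH exprS.
Qed.
Lemma mc_norm (ch : {unit R} -> algC) : mult_char ch -> forall u, ch u * (ch u)^* = 1.
Proof.
move=> hc u; apply: (root_norm (order_gt0 u)).
by rewrite -(mcX hc) expg_order (mc1 hc).
Qed.
Lemma mcV (ch : {unit R} -> algC) : mult_char ch -> forall u, ch (u^-1)%g = (ch u)^*.
Proof.
move=> hc u; apply: (mulfI (mc_nz hc u)); rewrite (mc_norm hc) -(mcM hc).
by rewrite mulgV (mc1 hc).
Qed.

Definition mkU (x : R) : {unit R} := insubd (1%g : {unit R}) x.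
Lemma val_mkU x : x \is a GRing.unit -> val (mkU x) = x.
Proof. by move=> hx; rewrite /mkU val_insubd hx. Qed.

Lemma sum_shift (T : finType) (F : T -> algC) (P : pred T) (h : T -> T) (c : algC) :
  injective h -> (forall x, P (h x) = P x) -> (forall x, P x -> F (h x) = c * F x) ->
  c != 1 -> \sum_(x | P x) F x = 0.
Proof.
move=> hi hP hF hc.
have : \sum_(x | P x) F x = c * \sum_(x | P x) F x.
  rewrite [LHS](reindex_inj hi) /= mulr_sumr; apply: eq_big => x; first by rewrite hP.
  by move=> px; rewrite hF // -hP.
move=> e; apply/eqP; move: e => /eqP.
rewrite -subr_eq0 -{1}[\sum_(x | P x) F x]mul1r -mulrBl mulf_eq0 subr_eq0 eq_sym.
by rewrite (negbTE hc).
Qed.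

Lemma sum_psi_all w : \sum_(a : R) psi (a * w) = (if w == 0 then #|R|%:R else 0).
Proof.
case: eqP => [->|/eqP hw].
  by rewrite (eq_bigr (fun _ => 1)) ?sumr_const ?card_ord // => a _; rewrite mulr0 psi0.
have [r hr] := psi_nontriv hw.
apply: (@sum_shift _ _ xpredT (fun a => a + r) (psi (r * w))) => //.
  by move=> x y /addIr.
by move=> x _; rewrite mulrDl psiD mulrC.
Qed.

Lemma ideal_nz (L : {set R}) : is_ideal L -> L != [set 0] -> exists2 s, s \in L & s != 0.
Proof.
move=> [h0 _] hL; apply: NNPP => hn; move/negP: hL; apply; apply/eqP/setP => x.
rewrite inE; apply/idP/idP => [hx|/eqP ->//].
by apply/eqP; apply: NNPP => hx0; apply: hn; exists x => //; apply/eqP.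
Qed.

Lemma sum_psi_L (L : {set R}) : is_ideal L -> L \subset soc -> L != [set 0] ->
  forall w, \sum_(s in L) psi (s * w) = (if w \in M then #|L|%:R else 0).
Proof.
move=> hL hLs hL0 w; case: ifP => hw.
  rewrite (eq_bigr (fun _ => 1)) ?sumr_const // => s hs.
  by rewrite (socP (subsetP hLs _ hs) hw) psi0.
have [s0 hs0 hs00] := ideal_nz hL hL0.
have hwu : w \is a GRing.unit by rewrite -[_ \is a _]negbK -MnU hw.
have hsw : s0 * w != 0.
  apply/negP => /eqP h; move/negP: hs00; apply; apply/eqP.
  by rewrite -[s0]mulr1 -(mulrV hwu) mulrA h mul0r.
have [r hr] := psi_nontriv hsw.
case: hL => [_ [hLD hLM]].
apply: (@sum_shift _ _ (mem L) (fun a => a + r * s0) (psi (r * (s0 * w)))) => //.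
- by move=> x y /addIr.
- move=> x /=; apply/idP/idP => hx; last by apply: hLD => //; exact: hLM _ _ hs0.
  by rewrite -(addrK (r * s0) x); apply: hLD => //; rewrite -mulN1r mulrA; exact: hLM _ _ hs0.
- by move=> x _; rewrite mulrDl psiD mulrC mulrA.
Qed.

Lemma M_unitM x y : x \is a GRing.unit -> (x * y \in M) = (y \in M).
Proof.
move=> hx; apply/idP/idP; last by apply: MMl.
by move=> h; rewrite -[y]mul1r -(mulVr hx) -mulrA; apply: MMl.
Qed.

Lemma condE (x a : R) : x \is a GRing.unit -> (x ^+ 2 - a \in M) = (x - a * x^-1 \in M).
Proof.
move=> hx; rewrite -(@M_unitM x^-1) ?unitrV //; congr (_ \in M).
by rewrite mulrBr expr2 mulrA mulVr // mul1r mulrC.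
Qed.

Lemma inv1s s : s \in soc -> (1 + s)^-1 = 1 - s.
Proof.
by move=> hs; apply: mulr1_eq; rewrite mulrDl mul1r mulrBr mulr1 (soc_sq hs hs) subr0 addrNK.
Qed.

Lemma unit_of1 (s : R) : s \in M -> exists h : {unit R}, val h = 1 + s.
Proof. by move=> hs; exists (mkU (1 + s)); rewrite val_mkU // unit1M. Qed.

Lemma L_soc_M (L : {set R}) : L \subset soc -> forall s, s \in L -> s \in M.
Proof. by move=> hLs s hs; apply: socM; apply: (subsetP hLs). Qed.

Lemma card_L_nz (L : {set R}) : is_ideal L -> (#|L|%:R : algC) != 0.
Proof. by case=> h0 _; rewrite pnatr_eq0 -lt0n; apply/card_gt0P; exists 0. Qed.

Lemma K_loc (tau : {unit R} -> algC) (htau : mult_char tau) (L : {set R})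
  (hL : is_ideal L) (hLs : L \subset soc) (hL0 : L != [set 0])
  (htL : trivial_on_1plus tau L) (a : R) :
  kloosterman psi tau a = \sum_(u : {unit R})
     (if val u ^+ 2 - a \in M then tau u * psi (val u + a * (val u)^-1) else 0).
Proof.
apply: (mulfI (card_L_nz hL)).
rewrite -[in LHS](sumr_const (mem L) (1 : algC)) mulr_suml /kloosterman.
have step : forall s, s \in L -> \sum_(u : {unit R}) tau u * psi (val u + a * (val u)^-1) =
   \sum_(u : {unit R}) tau u * psi (val u + a * (val u)^-1) * psi (s * (val u - a * (val u)^-1)).
  move=> s hs; have hsM := L_soc_M hLs hs; have [h hh] := unit_of1 hsM.
  rewrite (reindex_inj (mulIg h)) /=; apply: eq_bigr => u _.
  have th : tau h = 1 by apply: htL; rewrite hh addrAC subrr add0r.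
  rewrite (mcM htau) th mulr1 -mulrA -psiD.
  rewrite hh invrM ?unit1M ?(valP u) //.
  rewrite inv1s ?(subsetP hLs) //; congr (_ * psi _); ring.
rewrite (eq_bigr (fun s => \sum_(u : {unit R}) tau u * psi (val u + a * (val u)^-1) * psi (s * (val u - a * (val u)^-1)))); last by move=> s hs; rewrite mul1r (step s hs).
rewrite exchange_big mulr_sumr; apply: eq_bigr => u _.
rewrite -mulr_sumr (sum_psi_L hL hLs hL0) condE ?(valP u) //.
by case: ifP => _; rewrite ?mulr0 // mulrC.
Qed.

Lemma K_M (tau : {unit R} -> algC) (htau : mult_char tau) (L : {set R})
  (hL : is_ideal L) (hLs : L \subset soc) (hL0 : L != [set 0])
  (htL : trivial_on_1plus tau L) (a : R) : a \in M -> kloosterman psi tau a = 0.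
Proof.
move=> ha; rewrite (K_loc htau hL hLs hL0 htL); apply: big1 => u _.
case: ifP => // h; exfalso.
have : val u ^+ 2 \in M by rewrite -(subrK a (val u ^+ 2)); apply: MD.
by rewrite MnU unitrX ?(valP u).
Qed.

Lemma sum_units (F : R -> algC) :
  \sum_(a | a \is a GRing.unit) F a = \sum_(u : {unit R}) F (val u).
Proof.
rewrite (reindex_omap (val : {unit R} -> R) insub); last first.
  by move=> i hi; rewrite insubT.
by apply: eq_bigl => u; rewrite (valP u) valK eqxx.
Qed.

Lemma sum_R_split (F : R -> algC) :
  \sum_(a : R) F a = \sum_(u : {unit R}) F (val u) + \sum_(a | a \in M) F a.
Proof.
rewrite (bigID (fun a => a \is a GRing.unit)) /= sum_units; congr (_ + _).
by apply: eq_bigl => a; rewrite MnU.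
Qed.

Lemma sum_psi_alln w : \sum_(a : R) psi (a * w) = (if w == 0 then #|R|%:R else 0).
Proof. exact: sum_psi_all. Qed.

Lemma parseval (tau : {unit R} -> algC) (htau : mult_char tau) (L : {set R})
  (hL : is_ideal L) (hLs : L \subset soc) (hL0 : L != [set 0])
  (htL : trivial_on_1plus tau L) :
  \sum_(a : {unit R}) `|kloosterman psi tau (val a)| ^+ 2 = (#|{: {unit R}}| * #|R|)%:R.
Proof.
have full : \sum_(a : R) `|kloosterman psi tau a| ^+ 2 = (#|{: {unit R}}| * #|R|)%:R.
  have e1 : forall a, `|kloosterman psi tau a| ^+ 2 = \sum_(u : {unit R}) \sum_(v : {unit R})
      tau u * (tau v)^* * psi (val u - val v) * psi (a * ((val u)^-1 - (val v)^-1)).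
    move=> a; rewrite normCK /kloosterman rmorph_sum mulr_suml; apply: eq_bigr => u _.
    rewrite mulr_sumr; apply: eq_bigr => v _.
    rewrite rmorphM /= mulrACA psiB -[RHS]mulrA -psiD; congr (_ * psi _); ring.
  rewrite (eq_bigr _ (fun a _ => e1 a)) exchange_big /=.
  rewrite natrM -sumr_const mulr_suml; apply: eq_bigr => u _.
  rewrite exchange_big /= (eq_bigr (fun v => if v == u then #|R|%:R else 0)).
    by rewrite -big_mkcond big_pred1_eq mul1r.
  move=> v _; rewrite -mulr_sumr sum_psi_all.
  case: (v =P u) => [->|hv].
    by rewrite !subrr eqxx (mc_norm htau) psi0 !mul1r.
  case: eqP => [/eqP|]; rewrite ?mulr0 //.
  rewrite subr_eq0 => /eqP /invr_inj h; exfalso; apply: hv.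
  by apply: val_inj.
rewrite -full sum_R_split [X in _ = _ + X]big1 ?addr0 //.
by move=> a ha; rewrite (K_M htau hL hLs hL0 htL ha) normr0 expr0n.
Qed.

Lemma mkU_val (x : R) : x \is a GRing.unit -> FinRing.uval (mkU x) = x.
Proof. exact: val_mkU. Qed.

Lemma valE (u : {unit R}) : \val u = FinRing.uval u.
Proof. by []. Qed.

Lemma uunit (u : {unit R}) : val u \is a GRing.unit.
Proof. exact: valP. Qed.

Lemma invM_units (u v : {unit R}) : (val u * val v)^-1 = (val v)^-1 * (val u)^-1.
Proof. by rewrite invrM ?(valP u) ?(valP v). Qed.

Lemma invdiffM (a u v : {unit R}) :
  (val a * ((val u)^-1 - (val v)^-1) \in M) = (val u - val v \in M).
Proof.
have hu := valP u; have hv := valP v; have ha := valP a.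
have e : val a * ((val u)^-1 - (val v)^-1) = (val a * (val u)^-1 * (val v)^-1) * - (val u - val v).
  transitivity (val a * (val u)^-1 * (val v * (val v)^-1) - val a * (val v)^-1 * (val u * (val u)^-1)).
    by rewrite !mulrV // !mulr1 mulrBr.
  ring.
rewrite e M_unitM ?MNE //.
by rewrite !unitrM !unitrV !uunit.
Qed.

Lemma I_zero (a t : {unit R}) : val t - 1 \in M -> val t - 1 \notin soc ->
  \sum_(v : {unit R}) (if val v ^+ 2 - val a \in M then
     psi ((val t - 1) * (val v - val a * (val t)^-1 * (val v)^-1)) else 0) = 0.
Proof.
set n := val t - 1 => hnM hns.
have [m0 [hm0 hnm0]] : exists m0, m0 \in M /\ n * m0 != 0.
  apply: NNPP => hn; move/negP: hns; apply; apply: socI => m hm.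
  by apply/eqP; apply: NNPP => h; apply: hn; exists m; split => //; apply/negP.
have [r [hr0 hrs]] := to_soc hnm0.
have [r' hr'] := psi_nontriv hr0.
set y := r' * r * m0 * 2^-1.
have hyM : y \in M by rewrite /y mulrC; apply: MMl; apply: MMl.
have hny : n * y = (r' * (r * (n * m0))) * 2^-1 by rewrite /y; ring.
have hnys : n * y \in soc.
  by rewrite hny mulrC; case: soc_ideal => [_ [_ hm]]; apply: (hm); apply: (hm).
have h2ny : psi (n * y + n * y) != 1.
  have e2 : (2:R)^-1 + 2^-1 = 1.
    have h2 : (2:R) * 2^-1 = 1 by apply: mulrV; exact: unit2.
    by rewrite -[RHS]h2; ring.
  by rewrite hny -mulrDr e2 mulr1.
have ha := valP a; have ht := valP t.
apply: (@sum_shift _ _ xpredT (fun v => mkU (val v + y)) (psi (n * y + n * y))) => //.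
- move=> v w /(congr1 val); rewrite !val_mkU ?unitDM ?(valP v) ?(valP w) //.
  by move/addIr => h; apply: val_inj.
- move=> v _; have hv := valP v; have hvy : val v + y \is a GRing.unit by apply: unitDM.
  rewrite ?val_mkU ?mkU_val //.
  have e : (val v + y) ^+ 2 - val a = (val v ^+ 2 - val a) + y * (val v *+ 2 + y) by ring.
  rewrite e; case: (boolP (val v ^+ 2 - val a \in M)) => hc.
    rewrite ifT; last by apply: MD => //; apply: MMr.
    set iv := (val v)^-1; set iw := (val v + y)^-1; set it := (val t)^-1.
    have hiv : val v * iv = 1 by rewrite mulrV.
    have hiw : (val v + y) * iw = 1 by rewrite mulrV.
    have hit : val t * it = 1 by rewrite mulrV.
    have ed : iv - iw = y * iv * iw.
      transitivity (iv * ((val v + y) * iw) - iw * (val v * iv)); first by rewrite hiw hiv !mulr1.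
      ring.
    set X := val a * it * iv * iw - 1.
    have hX : X \in M.
      have eX : X * (val t * val v * (val v + y)) =
         (val a - val v ^+ 2) - (val t - 1) * val v ^+ 2 - val t * val v * y.
        transitivity (val a * (val t * it) * (val v * iv) * ((val v + y) * iw) - val t * val v * (val v + y)).
          by rewrite /X; ring.
        by rewrite hit hiv hiw !mulr1; ring.
      have : X * (val t * val v * (val v + y)) \in M.
        rewrite eX; apply: MB; last by apply: MMl.
        apply: MB; last by apply: MMr.
        by rewrite -opprB MNE.
      by rewrite mulrC M_unitM // !unitrM ht hv hvy.
    rewrite -psiD; congr (psi _).
    transitivity (n * (val v - val a * it * iv) + n * y * (2 + X)).
      have -> : n * (val v + y - val a * it * iw) = n * (val v - val a * it * iv) + n * y + n * (val a * it) * (iv - iw) by ring.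
      by rewrite ed /X; ring.
    by rewrite [n * y * (2 + X)]mulrDr (socP hnys hX) addr0; ring.
  by rewrite ifF ?mulr0 //; apply/negP => h; move/negP: hc; apply;
     rewrite -(addrK (y * (val v *+ 2 + y)) (val v ^+ 2 - val a)); apply: MB => //; apply: MMr.
Qed.

Section Moment.
Variable tau : {unit R} -> algC.
Hypothesis htau : mult_char tau.
Variable Lt : {set R}.
Hypotheses (hLt : is_ideal Lt) (hLts : Lt \subset soc) (hLt0 : Lt != [set 0])
  (htLt : trivial_on_1plus tau Lt).

Definition ph (x : R) (u : {unit R}) := val u + x * (val u)^-1.

Definition Gr (x : R) := \sum_(u : {unit R}) \sum_(v : {unit R})
  (if (val u ^+ 2 - x \in M) && (val v ^+ 2 - x \in M)
   then tau u * (tau v)^* * psi (ph x u - ph x v) else 0).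

Lemma E1 (x : R) : `|kloosterman psi tau x| ^+ 2 = Gr x.
Proof.
rewrite (K_loc htau hLt hLts hLt0 htLt) normCK rmorph_sum mulr_suml.
apply: eq_bigr => u _; rewrite mulr_sumr; apply: eq_bigr => v _.
case: ifP => h1; case: ifP => h2 /=; rewrite ?rmorph0 ?mulr0 ?mul0r //.
by rewrite rmorphM /= mulrACA psiB.
Qed.

Definition Gp (x : R) := \sum_(u : {unit R}) \sum_(v : {unit R})
  (if [&& (val u ^+ 2 - x \in M), (val v ^+ 2 - x \in M) & (val u - val v \in M)]
   then tau u * (tau v)^* * psi (ph x u - ph x v) else 0).

Lemma Gr_avg (L : {set R}) (hL : is_ideal L) (hLs : L \subset soc) (hL0 : L != [set 0])
  (a : {unit R}) : \sum_(s in L) Gr (val a * (1 + s)) = #|L|%:R * Gp (val a).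
Proof.
have step : forall s, s \in L -> Gr (val a * (1 + s)) = \sum_(u : {unit R}) \sum_(v : {unit R})
  (if (val u ^+ 2 - val a \in M) && (val v ^+ 2 - val a \in M)
   then tau u * (tau v)^* * psi (ph (val a) u - ph (val a) v) *
        psi (s * (val a * ((val u)^-1 - (val v)^-1))) else 0).
  move=> s hs; have hsM := L_soc_M hLs hs.
  have cE : forall w : {unit R}, (val w ^+ 2 - val a * (1 + s) \in M) = (val w ^+ 2 - val a \in M).
    move=> w; have -> : val w ^+ 2 - val a * (1 + s) = (val w ^+ 2 - val a) - val a * s by ring.
    apply/idP/idP => h; first by rewrite -(subrK (val a * s) (val w ^+ 2 - val a)); apply: MD => //; apply: MMl.
    by apply: MB => //; apply: MMl.
  apply: eq_bigr => u _; apply: eq_bigr => v _; rewrite !cE.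
  case: ifP => // _; rewrite -[RHS]mulrA -psiD; congr (_ * psi _); rewrite /ph; ring.
rewrite (eq_bigr _ step) exchange_big /= mulr_sumr; apply: eq_bigr => u _.
rewrite exchange_big /= mulr_sumr; apply: eq_bigr => v _.
case: (boolP ((val u ^+ 2 - val a \in M) && (val v ^+ 2 - val a \in M))) => hc.
  rewrite -mulr_sumr (sum_psi_L hL hLs hL0) invdiffM andbA hc /=.
  by case: ifP => h; rewrite ?mulr0 // mulrC.
by rewrite big1 // andbA (negbTE hc) mulr0.
Qed.

Variable ch : {unit R} -> algC.
Hypothesis hch : mult_char ch.
Variable Lc : {set R}.
Hypotheses (hLc : is_ideal Lc) (hLcs : Lc \subset soc) (hLc0 : Lc != [set 0])
  (hcL : trivial_on_1plus ch Lc).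

Lemma E2 : \sum_(a : {unit R}) ch a * `|kloosterman psi tau (val a)| ^+ 2 =
  \sum_(a : {unit R}) ch a * Gp (val a).
Proof.
apply: (mulfI (card_L_nz hLc)).
rewrite -[in LHS](sumr_const (mem Lc) (1 : algC)) mulr_suml.
have step : forall s, s \in Lc ->
  1 * (\sum_(a : {unit R}) ch a * `|kloosterman psi tau (val a)| ^+ 2) =
  \sum_(a : {unit R}) ch a * Gr (val a * (1 + s)).
  move=> s hs; have hsM := L_soc_M hLcs hs.
  have hu : (1 + s) \is a GRing.unit by apply: unit1M.
  rewrite mul1r (reindex_inj (mulIg (mkU (1 + s)))) /=; apply: eq_bigr => a _.
  have th : ch (mkU (1 + s)) = 1.
    by apply: hcL; rewrite mkU_val // addrAC subrr add0r.
  by rewrite (mcM hch) th mulr1 E1 /= mkU_val.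
rewrite (eq_bigr _ step) exchange_big /= mulr_sumr; apply: eq_bigr => a _.
by rewrite -mulr_sumr (Gr_avg hLc hLcs hLc0) mulrCA.
Qed.

Definition ctau := \sum_(t : {unit R} | val t - 1 \in soc) tau t.
Definition Nc (a : {unit R}) :=
  \sum_(v : {unit R}) (if val v ^+ 2 - val a \in M then 1 else 0 : algC).

Lemma M_unitMr x (u : R) : u \is a GRing.unit -> (x * u \in M) = (x \in M).
Proof. by move=> hu; rewrite mulrC M_unitM. Qed.

Lemma E3 (a : {unit R}) : Gp (val a) = ctau * Nc a.
Proof.
rewrite /Gp exchange_big /=.
have step : forall v : {unit R}, \sum_(u : {unit R})
  (if [&& (val u ^+ 2 - val a \in M), (val v ^+ 2 - val a \in M) & (val u - val v \in M)]
   then tau u * (tau v)^* * psi (ph (val a) u - ph (val a) v) else 0) =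
  \sum_(t : {unit R}) (if val t - 1 \in M then tau t *
     (if val v ^+ 2 - val a \in M then
        psi ((val t - 1) * (val v - val a * (val t)^-1 * (val v)^-1)) else 0) else 0).
  move=> v; rewrite (reindex_inj (mulIg v)) /=; apply: eq_bigr => t _.
  have hv := uunit v; have ht := uunit t.
  have e1 : val t * val v - val v = (val t - 1) * val v by ring.
  rewrite e1 M_unitMr //.
  case: (boolP (val t - 1 \in M)) => htM; last by rewrite !andbF.
  rewrite andbT; case: (boolP (val v ^+ 2 - val a \in M)) => hvM; last by rewrite andbF mulr0.
  rewrite andbT ifT; last first.
    have -> : (val t * val v) ^+ 2 - val a =
      (val v ^+ 2 - val a) + (val t - 1) * ((val t + 1) * val v ^+ 2) by ring.
    by apply: MD => //; apply: MMr.
  rewrite (mcM htau) -[tau t * tau v * _]mulrA (mc_norm htau) mulr1; congr (_ * psi _).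
  rewrite /ph invrM //.
  set it := (val t)^-1; set iv := (val v)^-1.
  have hit : val t * it = 1 by rewrite mulrV.
  transitivity ((val t - 1) * (val v - val a * it * iv) + val a * iv * (val t * it - 1)).
    by rewrite FinRing.val_unitM !valE; ring.
  by rewrite hit subrr mulr0 addr0 !valE.
under eq_bigr => v _ do rewrite step.
rewrite exchange_big /=.
rewrite /ctau mulr_suml [RHS]big_mkcond; apply: eq_bigr => t _ /=.
case: (boolP (val t - 1 \in soc)) => hs.
  have htM : val t - 1 \in M by apply: socM.
  under eq_bigr => v _ do rewrite htM.
  rewrite -mulr_sumr /Nc; congr (_ * _); apply: eq_bigr => v _.
  case: ifP => hvM //.
  have hv := uunit v; have ht := uunit t.
  set w := val v - val a * (val t)^-1 * (val v)^-1.
  have hw : w \in M.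
    have ew : w * (val t * val v) = (val v ^+ 2 - val a) + (val t - 1) * val v ^+ 2.
      transitivity (val t * (val v * val v) - val a * ((val t)^-1 * val t) * ((val v)^-1 * val v)); first by rewrite /w; ring.
      by rewrite !mulVr // !mulr1; ring.
    have : w * (val t * val v) \in M by rewrite ew; apply: MD => //; apply: MMr; apply: socM.
    by rewrite M_unitMr // unitrM ht hv.
  by rewrite (socP hs hw) psi0.
case: (boolP (val t - 1 \in M)) => htM.
  by rewrite -mulr_sumr (I_zero a htM hs) mulr0.
by rewrite big1.
Qed.

Lemma E4 : \sum_(a : {unit R}) ch a * Nc a =
  (\sum_(w : {unit R} | val w - 1 \in M) ch w) * (\sum_(v : {unit R}) ch v ^+ 2).
Proof.
rewrite /Nc.
have step : forall a : {unit R}, ch a * \sum_(v : {unit R}) (if val v ^+ 2 - val a \in M then 1 else 0 : algC) =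
   \sum_(v : {unit R}) (if val v ^+ 2 - val a \in M then ch a else 0).
  move=> a; rewrite mulr_sumr; apply: eq_bigr => v _; case: ifP; by rewrite ?mulr1 ?mulr0.
under eq_bigr => a _ do rewrite step.
rewrite exchange_big /= mulr_sumr; apply: eq_big => // v _.
rewrite (reindex_inj (mulgI (v ^+ 2)%g)) mulr_suml [RHS]big_mkcond; apply: eq_bigr => w _.
rewrite FinRing.val_unitM FinRing.val_unitX.
have -> : val v ^+ 2 - val v ^+ 2 * val w = - (val v ^+ 2 * (val w - 1)) by ring.
rewrite MNE M_unitM ?unitrX ?uunit //.
by case: ifP; rewrite // (mcM hch) (mcX hch) mulrC.
Qed.

Lemma moment : \sum_(a : {unit R}) ch a * `|kloosterman psi tau (val a)| ^+ 2 =
  ctau * ((\sum_(w : {unit R} | val w - 1 \in M) ch w) * (\sum_(v : {unit R}) ch v ^+ 2)).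
Proof.
rewrite E2 -E4 mulr_sumr; apply: eq_bigr => a _.
by rewrite E3 mulrCA.
Qed.

End Moment.

Definition Wset := [set w : {unit R} | val w - 1 \in M].
Definition Qset := [set u : {unit R} | [exists v : R, val u - v ^+ 2 \in M]].

Lemma coset_card (x : {unit R}) : #|[set u : {unit R} | val u - val x \in M]| = #|Wset|.
Proof.
rewrite -[RHS](card_imset _ (mulgI x)); apply: eq_card => u; rewrite inE.
apply/idP/imsetP => [h|[w hw ->]].
  exists (x^-1 * u)%g; last by rewrite mulKVg.
  rewrite inE FinRing.val_unitM FinRing.val_unitV.
  have -> : (val x)^-1 * val u - 1 = (val x)^-1 * (val u - val x).
    by rewrite mulrBr mulVr ?uunit.
  by apply: MMl.
move: hw; rewrite inE FinRing.val_unitM => hw.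
have -> : val x * val w - val x = val x * (val w - 1) by rewrite mulrBr mulr1.
by apply: MMl.
Qed.

Lemma W_gt0 : (0 < #|Wset|)%N.
Proof. by apply/card_gt0P; exists 1%g; rewrite inE subrr M0. Qed.

Lemma sq_unit (u : {unit R}) (v0 : R) : val u - v0 ^+ 2 \in M -> v0 \is a GRing.unit.
Proof.
move=> h; rewrite -(unitrX_pos v0 (isT : (0 < 2)%N)) -[_ \is a _]negbK -MnU.
apply/negP => h2; move: (unitNM (uunit u)).
by rewrite -(subrK (v0 ^+ 2) (val u)) (MD h h2).
Qed.

Lemma count_Q : (#|{: {unit R}}| <= 2 * #|Qset|)%N.
Proof.
pose c (u v : {unit R}) := val u - val v ^+ 2 \in M.
have e1 : (\sum_(v : {unit R}) \sum_(u : {unit R}) (c u v : nat))%N = (#|{: {unit R}}| * #|Wset|)%N.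
  rewrite -sum_nat_const; apply: eq_bigr => v _.
  rewrite -(coset_card (v ^+ 2)%g) -sum1dep_card [RHS]big_mkcond /=; apply: eq_bigr => u _.
  by rewrite /c FinRing.val_unitX; case: ifP.
have e2 : (\sum_(u : {unit R}) \sum_(v : {unit R}) (c u v : nat) <=
           \sum_(u : {unit R}) (if u \in Qset then 2 * #|Wset| else 0))%N.
  apply: leq_sum => u _.
  case: ifP => hQ; last first.
    rewrite leqn0 sum_nat_eq0; apply/forallP => v; apply/implyP => _.
    rewrite eqb0; apply/negP => h; move/negP: hQ; apply.
    by rewrite inE; apply/existsP; exists (val v).
  move: hQ; rewrite inE => /existsP [v0 hv0].
  have hv0u := sq_unit hv0.
  pose x0 := mkU v0; pose x1 := mkU (- v0).
  have hx0 : val x0 = v0 by rewrite val_mkU.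
  have hx1 : val x1 = - v0 by rewrite val_mkU // unitrN.
  apply: (@leq_trans (#|[set v : {unit R} | (val v - val x0)%R \in M]| + #|[set v : {unit R} | (val v - val x1)%R \in M]|)%N); last first.
    by rewrite !coset_card mul2n addnn.
  set A := [set v : {unit R} | (val v - val x0)%R \in M].
  set B := [set v : {unit R} | (val v - val x1)%R \in M].
  apply: (@leq_trans (\sum_(v : {unit R}) ((v \in A) + (v \in B)))%N); last first.
    rewrite big_split /= -!sum1_card !(big_mkcond (fun i => i \in _)) /=.
    by apply: leq_add; apply: eq_leq; apply: eq_bigr => v _; case: (v \in _).
  apply: leq_sum => v _; rewrite /c.
  case: (boolP (val u - val v ^+ 2 \in M)) => hc //=.
  rewrite !inE hx0 hx1.
  have hvv : (val v - v0) * (val v - - v0) \in M.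
    have -> : (val v - v0) * (val v - - v0) = (val u - v0 ^+ 2) - (val u - val v ^+ 2) by ring.
    by apply: MB.
  case: (boolP (val v - v0 \in M)) => // h1.
  case: (boolP (val v - - v0 \in M)) => // h2.
  move: hvv; rewrite MnU unitrM -[val v - v0 \is a _]negbK -MnU h1 /=.
  by rewrite -[val v - - v0 \is a _]negbK -MnU h2.
have e3 : (\sum_(u : {unit R}) (if u \in Qset then 2 * #|Wset| else 0) = #|Qset| * (2 * #|Wset|))%N.
  by rewrite -big_mkcond /= sum_nat_const.
have := leq_trans (leq_trans (eq_leq (esym e1)) _) e2.
rewrite exchange_big /= => /(_ (leqnn _)); rewrite e3.
move=> h; rewrite -(leq_pmul2r W_gt0); move: h; by rewrite mulnCA mulnA.
Qed.

Lemma Q_triv (ch : {unit R} -> algC) (hch : mult_char ch) :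
  (forall w, val w - 1 \in M -> ch w = 1) -> (forall v, ch v ^+ 2 = 1) ->
  forall u, u \in Qset -> ch u = 1.
Proof.
move=> hW hsq u; rewrite inE => /existsP [v0 hv0].
have hv0u := sq_unit hv0.
pose vu := mkU v0; have hvu : val vu = v0 by rewrite val_mkU.
pose w := ((vu ^+ 2)^-1 * u)%g.
have -> : u = (vu ^+ 2 * w)%g by rewrite /w mulKVg.
rewrite (mcM hch) (mcX hch) hsq mul1r; apply: hW.
rewrite /w FinRing.val_unitM FinRing.val_unitV FinRing.val_unitX hvu.
have hv2 : v0 ^+ 2 \is a GRing.unit by apply: unitrX.
have -> : (v0 ^+ 2)^-1 * val u - 1 = (v0 ^+ 2)^-1 * (val u - v0 ^+ 2).
  by rewrite mulrBr mulVr.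
by apply: MMl.
Qed.

Lemma char_cases (ch : {unit R} -> algC) (hch : mult_char ch) :
  (forall w, val w - 1 \in M -> ch w = 1) -> (forall v, ch v ^+ 2 = 1) ->
  trivial_char ch \/ (forall u, ch u = quad_char M u).
Proof.
move=> hW hsq.
case: (classic (trivial_char ch)) => ht; [by left | right].
have [u0 hu0] : exists u0, ch u0 != 1.
  by apply: NNPP => hn; apply: ht => u; apply: NNPP => h; apply: hn; exists u; apply/eqP.
move=> u; rewrite /quad_char.
have hQ := Q_triv hch hW hsq.
case: ifP => hu.
  by apply: hQ; rewrite inE.
have := hsq u; move/eqP; rewrite sqrf_eq1 => /orP [/eqP h1|/eqP //].
exfalso.
pose K := [set x : {unit R} | ch x == 1].
have hKK : (#|K| + #|K| <= #|{: {unit R}}|)%N.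
  have hsub : (mulg u0) @: K \subset ~: K.
    apply/subsetP => y /imsetP [x hx ->]; rewrite !inE (mcM hch).
    by move: hx; rewrite inE => /eqP ->; rewrite mulr1.
  have := subset_leq_card hsub; rewrite card_imset; last by apply: mulgI.
  have := cardsC K; rewrite cardT /= => <-; lia.
have hprop : Qset \proper K.
  rewrite properE; apply/andP; split.
    by apply/subsetP => x hx; rewrite inE hQ.
  apply/subsetPn; exists u; first by rewrite inE h1.
  by rewrite inE hu.
have := proper_card hprop; have := count_Q; rewrite cardT /=.
move: hKK; rewrite cardT /=; lia.
Qed.

Lemma soc_nz : soc != [set 0].
Proof.
have [r [h1 h2]] := to_soc (oner_neq0 R).
by apply/eqP => h; move: h2; rewrite h inE (negbTE h1).
Qed.

Lemma get_L (ch : {unit R} -> algC) (hnp : ~ primitive_mult_char M ch) :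
  exists L, [/\ is_ideal L, L \subset soc, L != [set 0] & trivial_on_1plus ch L].
Proof.
case: (classic (trivial_char ch)) => ht.
  by exists soc; split; [exact: soc_ideal|exact: subxx|exact: soc_nz|move=> u _; apply: ht].
have [I [hI [hIM [htI hI0]]]] : exists I, is_ideal I /\ I \subset M /\ trivial_on_1plus ch I /\ I <> [set 0].
  apply: NNPP => hn; apply: hnp; split => // I hI hIM htI.
  by apply: NNPP => h; apply: hn; exists I.
exists (I :&: soc); split.
- case: hI => [h0 [hD hm]]; case: soc_ideal => [s0 [sD sm]].
  split; first by rewrite in_setI h0 s0.
  split; first by move=> x y; rewrite !in_setI => /andP [h1 h2] /andP [h3 h4]; rewrite (hD _ _ h1 h3) (sD _ _ h2 h4).
  by move=> r x; rewrite !in_setI => /andP [h1 h2]; rewrite (hm _ _ h1) (sm _ _ h2).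
- exact: subsetIr.
- have [x hx hx0] := ideal_nz hI (introN eqP hI0).
  have [r [h1 h2]] := to_soc hx0.
  apply/eqP => h; have : r * x \in I :&: soc by rewrite in_setI h2 andbT; case: hI => _ [_ hm]; apply: hm.
  by rewrite h inE (negbTE h1).
- by move=> u; rewrite in_setI => /andP [h _]; apply: htI.
Qed.

Lemma A_zero (ch : {unit R} -> algC) (hch : mult_char ch) (w0 : {unit R}) :
  val w0 - 1 \in M -> ch w0 != 1 -> \sum_(w : {unit R} | val w - 1 \in M) ch w = 0.
Proof.
move=> hw0 hc.
apply: (@sum_shift _ _ (fun w : {unit R} => val w - 1 \in M) (mulg w0) (ch w0)) => //.
- exact: mulgI.
- move=> w /=.
  have -> : val w0 * val w - 1 = val w0 * (val w - 1) + (val w0 - 1) by ring.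
  apply/idP/idP => h; last by apply: MD => //; apply: MMl.
  rewrite -(M_unitM _ (uunit w0)); rewrite -(addrK (val w0 - 1) (val w0 * (val w - 1))).
  by apply: MB.
- by move=> w _; rewrite (mcM hch).
Qed.

Lemma B_zero (ch : {unit R} -> algC) (hch : mult_char ch) (v0 : {unit R}) :
  ch v0 ^+ 2 != 1 -> \sum_(v : {unit R}) ch v ^+ 2 = 0.
Proof.
move=> hc.
apply: (@sum_shift _ _ xpredT (mulg v0) (ch v0 ^+ 2)) => //.
- exact: mulgI.
- by move=> w _; rewrite (mcM hch) exprMn.
Qed.

Lemma main_sec (tau chi : {unit R} -> algC)
  (htau : mult_char tau) (htau_np : ~ primitive_mult_char M tau)
  (hchi : mult_char chi) (hchi_np : ~ primitive_mult_char M chi) :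
  let S := \sum_(a : {unit R}) chi a * `|kloosterman psi tau (FinRing.uval a)| ^+ 2 in
  ((trivial_char chi \/ (forall u, chi u = quad_char M u)) ->
     S = (#|{: {unit R}}| * #|R|)%:R) /\
  (~ (trivial_char chi \/ (forall u, chi u = quad_char M u)) -> S = 0).
Proof.
move=> S.
have [Lt [hLt hLts hLt0 htLt]] := get_L htau_np.
have [Lc [hLc hLcs hLc0 hcL]] := get_L hchi_np.
have hmom := moment htau hLt hLts hLt0 htLt hchi hLc hLcs hLc0 hcL.
pose one := fun _ : {unit R} => (1 : algC).
have hone : mult_char one by split => [u|u v]; rewrite /one ?oner_neq0 ?mulr1.
have hone1 : trivial_on_1plus one soc by [].
have h1 : \sum_(a : {unit R}) `|kloosterman psi tau (val a)| ^+ 2 = ctau tau *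
   ((\sum_(w : {unit R} | val w - 1 \in M) one w) * (\sum_(v : {unit R}) one v ^+ 2)).
  rewrite -(moment htau hLt hLts hLt0 htLt hone soc_ideal (subxx _) soc_nz hone1).
  by apply: eq_bigr => a _; rewrite /one mul1r.
rewrite /one in h1.
rewrite (parseval htau hLt hLts hLt0 htLt) in h1.
set A1 := \sum_(w : {unit R} | val w - 1 \in M) (1 : algC) in h1.
have hB1 : \sum_(v : {unit R}) (1 : algC) ^+ 2 = #|{: {unit R}}|%:R.
  by rewrite (eq_bigr (fun _ => 1)) ?sumr_const // => v _; rewrite expr1n.
rewrite hB1 in h1.
split.
  move=> hc.
  have hA : \sum_(w : {unit R} | val w - 1 \in M) chi w = A1.
    apply: eq_bigr => w hw; case: hc => [ht|hq]; first by apply: ht.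
    rewrite hq /quad_char ifT //; apply/existsP; exists 1; by rewrite expr1n.
  have hB : \sum_(v : {unit R}) chi v ^+ 2 = #|{: {unit R}}|%:R.
    rewrite -hB1; apply: eq_bigr => v _; case: hc => [ht|hq]; first by rewrite ht.
    by rewrite hq /quad_char; case: ifP => _; rewrite ?sqrrN ?expr1n.
  by rewrite /S hmom hA hB h1.
move=> hnc; rewrite /S hmom.
case: (classic (forall w : {unit R}, val w - 1 \in M -> chi w = 1)) => hW; last first.
  have [w0 [hw0 hc]] : exists w0 : {unit R}, val w0 - 1 \in M /\ chi w0 != 1.
    apply: NNPP => hn; apply: hW => w hw; apply: NNPP => h; apply: hn; exists w; split => //; exact/eqP.
  by rewrite (A_zero hchi hw0 hc) mul0r mulr0.
case: (classic (forall v : {unit R}, chi v ^+ 2 = 1)) => hsq; last first.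
  have [v0 hc] : exists v0 : {unit R}, chi v0 ^+ 2 != 1.
    apply: NNPP => hn; apply: hsq => v; apply: NNPP => h; apply: hn; exists v; exact/eqP.
  by rewrite (B_zero hchi hc) mulr0 mulr0.
by exfalso; apply: hnc; apply: char_cases.
Qed.
End Main.

Unset Implicit Arguments.
Set Strict Implicit.

Theorem mainTheorem10 (R : finComUnitRingType) (M : {set R})
  (hM : is_unique_maximal_ideal M)
  (hnf : ~ is_field_ring R)
  (hodd : odd_residue_char M)
  (psi : R -> algC) (hpsi : primitive_additive_char psi)
  (tau chi : {unit R} -> algC)
  (htau : mult_char tau) (htau_np : ~ primitive_mult_char M tau)
  (hchi : mult_char chi) (hchi_np : ~ primitive_mult_char M chi) :
  let S := \sum_(a : {unit R}) chi a * `|kloosterman psi tau (FinRing.uval a)| ^+ 2 in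
  ((trivial_char chi \/ (forall u, chi u = quad_char M u)) ->
     S = (#|{: {unit R}}| * #|R|)%:R) /\
  (~ (trivial_char chi \/ (forall u, chi u = quad_char M u)) -> S = 0).
Proof.
exact: (main_sec hM hnf hodd hpsi htau htau_np hchi hchi_np).
Qed.
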